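(* Let $P$ be a weighted combinatorial optimization problem and let $(T_S)_{S \in P}$ be the decision trees (with continuous branching functions) of a deterministic algorithm $A$ for $P$. Then for every instance $(S,w)$, $S=(n,W,L,\mathrm{cost})$, there exists a function $h : \mathbb{R} \to Q^n$ with the following properties: - $h(0)=0$ and $h$ is continuous at $0$; - $W$ continues into direction $h$ at $w$; - every branching function of $T_S$ is decreasing, constant, or increasing into direction $h$ at $w$. Consequently, breaking every tie $v_u(w)=0$ by taking the left child iff $v_u$ is decreasing into direction $h$ at $w$ defines a tie-breaking policy under which $A$ uses symbolic perturbation. That is, every deterministic algorithm admits a symbolic perturbation tie-breaking policy.
   Context: Let $Q$ be a subfield of $\mathbb{R}$ (e.g. $\mathbb{R}$, $\mathbb{Q}$, or the real algebraic numbers). Equip $Q^n$ with the Euclidean metric $d$. For $x \in Q^n$ and $\epsilon>0$, the $\epsilon$-neighborhood of $x$ is $\{y \in Q^n \mid d(x,y)<\epsilon\}$. A neighborhood of $x$ is an $\epsilon$-neighborhood of $x$ for some $\epsilon>0$. A set $U \subseteq Q^n$ is open if it contains a neighborhood of each of its points. A set $X \subseteq Q^n$ is semi-open if for every $x \in X$ and every neighborhood $N$ of $x$ there is a non-empty open set $U \subseteq Q^n$ with $U \subseteq N \cap X$. For $x \in \mathbb{R}$, $\mathrm{sgn}(x) = x/|x|$ if $x \neq 0$ and $\mathrm{sgn}(0)=0$. Problems: A weighted combinatorial optimization (minimization) problem $P$ is a set of problem structures; each structure $S=(n,W,L,\mathrm{cost})$ consists of a positive integer $n$, a semi-open set $W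 \subseteq Q^n$ of admissible weight vectors, a finite non-empty set $L$ of feasible solutions, and a function $\mathrm{cost} : W \times L \to \mathbb{R}$ such that $\mathrm{cost}(\cdot,l)$ is continuous on $W$ for every $l \in L$. An instance is a pair $(S,w)$ with $S \in P$ and $w \in W$. Algorithms: A deterministic algorithm $A$ for $P$ assigns to each structure $S=(n,W,L,\mathrm{cost}) \in P$ a finite rooted binary decision tree $T_S$. Each leaf is labelled with an element of $L \cup \{l_f\}$, where $l_f \notin L$ is a special symbol representing failure. Each internal node $u$ is labelled with a continuous branching function $v_u : W \to Q$. On input $(S,w)$, $A$ starts at the root of $T_S$. At an internal node $u$ it moves to the left child if $v_u(w)<0$ and to the right child if $v_u(w)>0$. If $v_u(w)=0$ (a tie), it moves to the left or right child according to a deterministic tie-breaking policy, i.e. a rule fixing, for every instance $(S,w)$ and every internal node $u$ with $v_u(w)=0$, which child is taken. $A$ returns the label $A(S,w)$ of the leaf reached. Directions: Let $W \subseteq Q^n$ be semi-open, $w \in W$, and $h : \mathbb{R} \to Q^n$ with $h(0)=0$ and $h$ continuous at $0$. $W$ continues into direction $h$ at $w$ if there is $\delta>0$ such that for every $0<a<\delta$ some neighborhood of $w+h(a)$ is contained in $W$. If $W$ continues into direction $h$ at $w$ and $f : W \to Q$ is continuous, then $f$ is increasing (resp. constant, decreasing) into direction $h$ at $w$ if the following holds: there is $\delta>0$ such that for every $0<a<\delta$ there is a neighborhood $N_a \subseteq W$ of $w+h(a)$ with $\mathrm{sgn}(f(y)-f(w)) = 1$ (resp. $0$, $-1$) for all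 $y \in N_a$. Symbolic perturbation: $A$ uses symbolic perturbation if, for every instance $(S,w)$ with $S=(n,W,L,\mathrm{cost})$, there exists a function $h_{S,w} : \mathbb{R} \to Q^n$ satisfying all of the following: - $h_{S,w}(0)=0$ and $h_{S,w}$ is continuous at $0$; - $W$ continues into direction $h_{S,w}$ at $w$; - every branching function of $T_S$ is decreasing, constant, or increasing into direction $h_{S,w}$ at $w$; - whenever a tie $v_u(w)=0$ occurs at an internal node $u$ on input $(S,w)$, $A$ takes the left child if $v_u$ is decreasing into direction $h_{S,w}$ at $w$, and the right child otherwise. *)

(* Defs.v *)
From Stdlib Require Import Reals List.
Import ListNotations.
Open Scope R_scope.

Set Implicit Arguments.

(* Points of R^n are encoded as functions nat -> R that vanish from index n on. *)
Definition pt := nat -> R.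

Definition is_subfield (Q : R -> Prop) : Prop :=
  Q 0 /\ Q 1 /\
  (forall x y, Q x -> Q y -> Q (x + y)) /\
  (forall x, Q x -> Q (- x)) /\
  (forall x y, Q x -> Q y -> Q (x * y)) /\
  (forall x, Q x -> x <> 0 -> Q (/ x)).

Definition inQn (Q : R -> Prop) (n : nat) (x : pt) : Prop :=
  (forall i, (i < n)%nat -> Q (x i)) /\ (forall i, (n <= i)%nat -> x i = 0).

Fixpoint sumsq (n : nat) (x y : pt) : R :=
  match n with
  | O => 0
  | S k => sumsq k x y + (x k - y k) ^ 2
  end.

Definition dist (n : nat) (x y : pt) : R := sqrt (sumsq n x y).

Definition vadd (x y : pt) : pt := fun i => x i + y i.
Definition vzero : pt := fun _ => 0.

Definition nbhd (Q : R -> Prop) (n : nat) (x : pt) (eps : R) (y : pt) : Prop :=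
  inQn Q n y /\ dist n x y < eps.

Definition subsetQn (Q : R -> Prop) (n : nat) (U : pt -> Prop) : Prop :=
  forall x, U x -> inQn Q n x.

Definition is_open (Q : R -> Prop) (n : nat) (U : pt -> Prop) : Prop :=
  subsetQn Q n U /\
  forall x, U x -> exists eps, 0 < eps /\ forall y, nbhd Q n x eps y -> U y.

Definition semi_open (Q : R -> Prop) (n : nat) (X : pt -> Prop) : Prop :=
  subsetQn Q n X /\
  forall x, X x -> forall eps, 0 < eps ->
    exists U : pt -> Prop, is_open Q n U /\ (exists y, U y) /\
      forall y, U y -> nbhd Q n x eps y /\ X y.

Definition cont_on (n : nat) (W : pt -> Prop) (f : pt -> R) : Prop :=
  forall x, W x -> forall e, 0 < e -> exists d, 0 < d /\
    forall y, W y -> dist n x y < d -> Rabs (f y - f x) < e.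

Definition cont_to_Q (Q : R -> Prop) (n : nat) (W : pt -> Prop) (f : pt -> R) : Prop :=
  cont_on n W f /\ forall x, W x -> Q (f x).

Definition sgn (x : R) : R :=
  match Rlt_dec x 0 with
  | left _ => -1
  | right _ => match Rlt_dec 0 x with left _ => 1 | right _ => 0 end
  end.

Definition good_dir (Q : R -> Prop) (n : nat) (h : R -> pt) : Prop :=
  (forall a, inQn Q n (h a)) /\
  h 0 = vzero /\
  (forall e, 0 < e -> exists d, 0 < d /\
     forall a, Rabs a < d -> dist n (h a) (h 0) < e).

Definition continues (Q : R -> Prop) (n : nat) (W : pt -> Prop) (h : R -> pt) (w : pt) : Prop :=
  exists delta, 0 < delta /\ forall a, 0 < a < delta ->
    exists eps, 0 < eps /\ forall y, nbhd Q n (vadd w (h a)) eps y -> W y.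

Definition dir_sign (Q : R -> Prop) (n : nat) (W : pt -> Prop) (f : pt -> R)
    (h : R -> pt) (w : pt) (s : R) : Prop :=
  exists delta, 0 < delta /\ forall a, 0 < a < delta ->
    exists eps, 0 < eps /\
      (forall y, nbhd Q n (vadd w (h a)) eps y -> W y) /\
      (forall y, nbhd Q n (vadd w (h a)) eps y -> sgn (f y - f w) = s).

Definition increasing_dir Q n W f h w := dir_sign Q n W f h w 1.
Definition constant_dir Q n W f h w := dir_sign Q n W f h w 0.
Definition decreasing_dir Q n W f h w := dir_sign Q n W f h w (-1).

Record structure := Struct {
  s_n : nat;
  s_W : pt -> Prop;
  s_L : Type;
  s_cost : pt -> s_L -> R
}.

Definition finite_nonempty (L : Type) : Prop :=
  exists l : list L, l <> [] /\ forall x : L, In x l.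

Definition valid_structure (Q : R -> Prop) (S : structure) : Prop :=
  (0 < s_n S)%nat /\ semi_open Q (s_n S) (s_W S) /\ finite_nonempty (s_L S) /\
  forall l, cont_on (s_n S) (s_W S) (fun w => s_cost S w l).

Definition problem := structure -> Prop.

(* Finite rooted binary decision trees; leaves labelled by option L
   (None is the failure symbol l_f). *)
Inductive tree (L : Type) : Type :=
| Leaf : option L -> tree L
| Node : (pt -> R) -> tree L -> tree L -> tree L.
Arguments Leaf {L} _.
Arguments Node {L} _ _ _.

(* Nodes are addressed by their path from the root (true = left child). *)
Fixpoint subtree {L} (t : tree L) (p : list bool) : option (tree L) :=
  match p with
  | [] => Some t
  | b :: p' => match t with
               | Leaf _ => None
               | Node _ l r => subtree (if b then l else r) p'
               end
  end.

Definition branch_at {L} (t : tree L) (p : list bool) (v : pt -> R) : Prop :=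
  exists l r, subtree t p = Some (Node v l r).

(* Direction taken at a node with branching function v: true = left.
   tie is the tie-breaking choice at that node. *)
Definition step (v : pt -> R) (w : pt) (tie : bool) : bool :=
  match Rlt_dec (v w) 0 with
  | left _ => true
  | right _ => match Rlt_dec 0 (v w) with left _ => false | right _ => tie end
  end.

(* [follows t w tb pre p]: starting at node pre, the run on input w with
   tie-breaking choices tb (indexed by node paths) takes the path p. *)
Fixpoint follows {L} (t : tree L) (w : pt) (tb : list bool -> bool)
    (pre : list bool) (p : list bool) : Prop :=
  match p with
  | [] => True
  | b :: p' => match t with
               | Leaf _ => False
               | Node v l r => step v w (tb pre) = b /\
                               follows (if b then l else r) w tb (pre ++ [b]) p'
               end
  end.

Definition reached {L} (t : tree L) (w : pt) (tb : list bool -> bool) (p : list bool) : Prop :=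
  follows t w tb [] p.

Definition algorithm := forall S : structure, tree (s_L S).

Definition valid_algorithm (Q : R -> Prop) (P : problem) (A : algorithm) : Prop :=
  forall S, P S -> forall p v, branch_at (A S) p v -> cont_to_Q Q (s_n S) (s_W S) v.

(* A deterministic tie-breaking policy: for each instance (S, w) and each
   internal node (path) which child to take on a tie (true = left). *)
Definition tie_policy := forall S : structure, pt -> list bool -> bool.

Definition uses_symbolic_perturbation (Q : R -> Prop) (P : problem) (A : algorithm)
    (tb : tie_policy) : Prop :=
  forall S, P S -> forall w, s_W S w ->
    exists h : R -> pt,
      good_dir Q (s_n S) h /\
      continues Q (s_n S) (s_W S) h w /\
      (forall p v, branch_at (A S) p v ->
         decreasing_dir Q (s_n S) (s_W S) v h w \/
         constant_dir Q (s_n S) (s_W S) v h w \/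
         increasing_dir Q (s_n S) (s_W S) v h w) /\
      (forall p v, branch_at (A S) p v -> reached (A S) w (tb S w) p -> v w = 0 ->
         (tb S w p = true <-> decreasing_dir Q (s_n S) (s_W S) v h w)).

(* Main.v *)
Require Import Defs.
From Stdlib Require Import Reals List Lra Classical ClassicalEpsilon.
Import ListNotations.
Require Import Defs.
Open Scope R_scope.

Lemma sumsq_ext n x y x' y' : (forall k, (x k - y k)^2 = (x' k - y' k)^2) ->
  sumsq n x y = sumsq n x' y'.
Proof. intros H; induction n; [reflexivity|].
  change (sumsq n x y + (x n - y n)^2 = sumsq n x' y' + (x' n - y' n)^2).
  rewrite IHn, H. reflexivity. Qed.

Lemma dist_ext n x y x' y' : (forall k, (x k - y k)^2 = (x' k - y' k)^2) ->
  dist n x y = dist n x' y'.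
Proof. intros H; unfold dist; now rewrite (sumsq_ext n x y x' y' H). Qed.

Lemma sumsq_self n x : sumsq n x x = 0.
Proof. induction n; simpl; auto. rewrite IHn. ring. Qed.

Lemma sgn_cases x : sgn x = -1 \/ sgn x = 0 \/ sgn x = 1.
Proof. unfold sgn; destruct (Rlt_dec x 0); [|destruct (Rlt_dec 0 x)]; auto. Qed.

Lemma sgn_zero x : sgn x = 0 <-> x = 0.
Proof. unfold sgn; destruct (Rlt_dec x 0); [|destruct (Rlt_dec 0 x)]; split; intro; lra. Qed.

Lemma sgn_close a b : Rabs (b - a) < Rabs a -> sgn b = sgn a.
Proof.
  intros H. unfold Rabs in H. destruct (Rcase_abs (b - a)), (Rcase_abs a);
  unfold sgn; destruct (Rlt_dec a 0), (Rlt_dec b 0), (Rlt_dec 0 a), (Rlt_dec 0 b); lra.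
Qed.

Lemma fchoice {A B : Type} (P : A -> B -> Prop) :
  (forall a, exists b, P a b) -> exists F : A -> B, forall a, P a (F a).
Proof.
  intros H. exists (fun a => proj1_sig (constructive_indefinite_description _ (H a))).
  intro a. exact (proj2_sig (constructive_indefinite_description _ (H a))).
Qed.

Lemma refine (Q : R -> Prop) n (W : pt -> Prop) (w : pt) (U : pt -> Prop) (f : pt -> R) :
  is_open Q n U -> (exists y, U y) -> (forall y, U y -> W y) -> cont_on n W f ->
  exists s U', is_open Q n U' /\ (exists y, U' y) /\ (forall y, U' y -> U y) /\
    (forall y, U' y -> sgn (f y - f w) = s).
Proof.
  intros [HsubU HopU] [y1 Hy1] HUW Hf.
  destruct (classic (exists y, U y /\ f y <> f w)) as [[y0 [Hy0 Hne]] | Hno].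
  - exists (sgn (f y0 - f w)), (fun y => U y /\ sgn (f y - f w) = sgn (f y0 - f w)).
    assert (Hs0 : sgn (f y0 - f w) <> 0) by (intro E; apply (proj1 (sgn_zero _)) in E; apply Hne; lra).
    split; [split|].
    + intros y [Hy _]; now apply HsubU.
    + intros y [Hy Hs].
      destruct (HopU y Hy) as [e1 [He1 He1U]].
      assert (Hfy : f y - f w <> 0).
      { intro E. apply Hs0. rewrite <- Hs. apply sgn_zero. exact E. }
      destruct (Hf y (HUW y Hy) (Rabs (f y - f w)) (Rabs_pos_lt _ Hfy)) as [d [Hd Hcd]].
      exists (Rmin e1 d). split; [apply Rmin_pos; auto|].
      intros z [HzQ Hzd].
      assert (HUz : U z).
      { apply He1U; split; [exact HzQ|]. eapply Rlt_le_trans; [exact Hzd|apply Rmin_l]. }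
      split; auto. rewrite <- Hs. apply sgn_close.
      replace (f z - f w - (f y - f w)) with (f z - f y) by ring.
      apply Hcd; auto. eapply Rlt_le_trans; [exact Hzd| apply Rmin_r].
    + split; [exists y0; auto|]. split; [intros y [H _]; auto|]. intros y [_ H]; auto.
  - exists 0, U. split; [split; auto|]. split; [eauto|]. split; auto.
    intros y Hy. apply sgn_zero. destruct (Req_dec (f y) (f w)); [lra|].
    exfalso; apply Hno; eauto.
Qed.

Definition GoodAt Q n (W : pt -> Prop) (w : pt) (fs : list (pt -> R)) (sig : (pt -> R) -> R)
  eps (U : pt -> Prop) :=
  is_open Q n U /\ (exists y, U y) /\ (forall y, U y -> W y /\ dist n w y < eps) /\
  (forall f, In f fs -> forall y, U y -> sgn (f y - f w) = sig f).

Definition Good Q n W w fs sig := forall eps, 0 < eps -> exists U, GoodAt Q n W w fs sig eps U.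

Lemma GoodAt_mono Q n W w fs sig eps eps' U U' :
  GoodAt Q n W w fs sig eps U -> eps <= eps' -> is_open Q n U' -> (exists y, U' y) ->
  (forall y, U' y -> U y) -> GoodAt Q n W w fs sig eps' U'.
Proof.
  intros [_ [_ [H3 H4]]] He Ho Hne Hs. split; auto. split; auto. split.
  - intros y Hy. destruct (H3 y (Hs y Hy)). split; auto. lra.
  - intros f Hf y Hy. apply H4; auto.
Qed.

Lemma good_exists Q n W w fs :
  semi_open Q n W -> W w -> (forall f, In f fs -> cont_on n W f) ->
  exists sig, Good Q n W w fs sig.
Proof.
  intros [HsubW HsoW] Hw. induction fs as [|f fs IH]; intros Hc.
  - exists (fun _ => 0). intros eps Heps. destruct (HsoW w Hw eps Heps) as [U [HU [Hne HUW]]].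
    exists U. split; auto. split; auto. split.
    + intros y Hy. destruct (HUW y Hy) as [[_ Hd] HW]. auto.
    + intros f [].
  - destruct IH as [sig Hsig]. { intros g Hg; apply Hc; right; auto. }
    assert (Hcf : cont_on n W f) by (apply Hc; left; auto).
    assert (Hex : exists s, forall eps, 0 < eps -> exists U, GoodAt Q n W w fs sig eps U /\
                   forall y, U y -> sgn (f y - f w) = s).
    { apply NNPP; intro Hn.
      assert (Hs : forall s, exists eps, 0 < eps /\ forall U, GoodAt Q n W w fs sig eps U ->
                     ~ (forall y, U y -> sgn (f y - f w) = s)).
      { intro s. apply NNPP; intro H. apply Hn. exists s. intros eps Heps.
        apply NNPP; intro H2. apply H. exists eps. split; auto. intros U HU Hy.
        apply H2. exists U; auto. }
      destruct (Hs (-1)) as [e1 [He1 H1]]. destruct (Hs 0) as [e2 [He2 H2]].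
      destruct (Hs 1) as [e3 [He3 H3]].
      assert (Hep : 0 < Rmin e1 (Rmin e2 e3)) by (repeat apply Rmin_pos; auto).
      destruct (Hsig _ Hep) as [U HU].
      pose proof HU as [HUo [HUne [HUW _]]].
      destruct (refine Q n W w U f HUo HUne (fun y Hy => proj1 (HUW y Hy)) Hcf)
        as [s [U' [HU'o [[y Hy] [HU'U HU's]]]]].
      assert (Hm1 : Rmin e1 (Rmin e2 e3) <= e1) by apply Rmin_l.
      assert (Hm2 : Rmin e1 (Rmin e2 e3) <= e2)
        by (eapply Rle_trans; [apply Rmin_r|apply Rmin_l]).
      assert (Hm3 : Rmin e1 (Rmin e2 e3) <= e3)
        by (eapply Rle_trans; [apply Rmin_r|apply Rmin_r]).
      pose proof (HU's y Hy) as Hsy.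
      destruct (sgn_cases (f y - f w)) as [E|[E|E]]; rewrite E in Hsy; subst s.
      - eapply H1; [eapply GoodAt_mono; eauto; exists y; auto|]. auto.
      - eapply H2; [eapply GoodAt_mono; eauto; exists y; auto|]. auto.
      - eapply H3; [eapply GoodAt_mono; eauto; exists y; auto|]. auto. }
    destruct Hex as [s Hs].
    exists (fun g => if excluded_middle_informative (g = f) then s else sig g).
    intros eps Heps. destruct (Hs eps Heps) as [U [[H1 [H2 [H3 H4]]] H5]].
    exists U. split; auto. split; auto. split; auto.
    intros g Hg y Hy. destruct (excluded_middle_informative (g = f)).
    + subst; auto.
    + destruct Hg as [Hg|Hg]; [congruence|]. apply H4; auto.
Qed.

Fixpoint fns {L} (t : tree L) : list (pt -> R) :=
  match t with Leaf _ => [] | Node v l r => v :: fns l ++ fns r end.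

Lemma branch_in {L} (t : tree L) p v : branch_at t p v -> In v (fns t).
Proof.
  unfold branch_at. revert t; induction p as [|b p IH]; intros t [l [r H]];
    destruct t as [o|v' l' r']; simpl in H; try discriminate.
  - injection H as <- <- <-. simpl. auto.
  - simpl. right. apply in_or_app. destruct b; [left|right]; apply IH; eauto.
Qed.

Lemma in_branch {L} (t : tree L) v : In v (fns t) -> exists p, branch_at t p v.
Proof.
  induction t as [o|v' l IHl r IHr]; simpl; [intros []|].
  intros [E|H].
  - subst. exists []. exists l, r. reflexivity.
  - apply in_app_or in H. destruct H as [H|H].
    + destruct (IHl H) as [p Hp]. exists (true :: p). exact Hp.
    + destruct (IHr H) as [p Hp]. exists (false :: p). exact Hp.
Qed.

Lemma branch_uniq {L} (t : tree L) p v v' : branch_at t p v -> branch_at t p v' -> v = v'.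
Proof.
  intros [l [r E]] [l' [r' E']]. rewrite E in E'. inversion E'. auto.
Qed.

Lemma part1 Q (HQ : is_subfield Q) n (W : pt -> Prop) fs w :
  semi_open Q n W -> W w -> (forall f, In f fs -> cont_on n W f) ->
  exists h, good_dir Q n h /\ continues Q n W h w /\
   (forall f, In f fs -> decreasing_dir Q n W f h w \/ constant_dir Q n W f h w \/
                         increasing_dir Q n W f h w).
Proof.
  intros HSO Hw Hc.
  destruct (good_exists Q n W w fs HSO Hw Hc) as [sig Hsig].
  destruct HSO as [HsubW _]. pose proof (HsubW w Hw) as [HwQ HwZ].
  destruct HQ as [Q0 [Q1 [Qadd [Qneg _]]]].
  assert (Hch : forall a, exists cr : pt * R, 0 < a -> inQn Q n (fst cr) /\ 0 < snd cr /\
     dist n w (fst cr) < a /\ forall y, nbhd Q n (fst cr) (snd cr) y -> W y /\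
     forall f, In f fs -> sgn (f y - f w) = sig f).
  { intro a. destruct (Rlt_dec 0 a) as [Ha|Ha].
    - destruct (Hsig a Ha) as [U [[HUsub HUop] [[y Hy] [HUW HUs]]]].
      destruct (HUop y Hy) as [e [He HeU]].
      exists (y, e). intros _. simpl. split; [apply HUsub; auto|]. split; auto.
      split; [apply HUW; auto|]. intros z Hz. pose proof (HeU z Hz) as Hz'.
      split; [apply HUW; auto|]. intros f Hf; apply HUs; auto.
    - exists (vzero, 1). intro; lra. }
  destruct (fchoice _ Hch) as [F HF].
  set (h := fun a => if Rlt_dec 0 a then (fun i => fst (F a) i - w i) else vzero).
  assert (Hkey : forall a, 0 < a -> forall y eps,
            nbhd Q n (vadd w (h a)) eps y -> nbhd Q n (fst (F a)) eps y).
  { intros a Ha y eps. unfold h; destruct (Rlt_dec 0 a); [|lra]. unfold nbhd.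
    rewrite (dist_ext n (vadd w (fun i => fst (F a) i - w i)) y (fst (F a)) y); auto.
    intro k; unfold vadd; ring. }
  assert (Hh0 : h 0 = vzero) by (unfold h; destruct (Rlt_dec 0 0); [lra|reflexivity]).
  exists h. split; [|split].
  - split; [|split; auto].
    + intro a. unfold h. destruct (Rlt_dec 0 a) as [Ha|Ha].
      * destruct (HF a Ha) as [[HcQ HcZ] _]. split.
        -- intros i Hi. unfold Rminus. apply Qadd; auto.
        -- intros i Hi. rewrite HcZ, HwZ; auto. ring.
      * split; intros; unfold vzero; auto.
    + intros e He. exists e. split; auto. intros a Ha. rewrite Hh0.
      unfold h. destruct (Rlt_dec 0 a) as [Hp|Hp].
      * destruct (HF a Hp) as [_ [_ [Hd _]]].
        rewrite (dist_ext n _ vzero w (fst (F a))) by (intro k; unfold vzero; ring).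
        rewrite Rabs_right in Ha by lra. lra.
      * unfold dist. rewrite sumsq_self, sqrt_0. auto.
  - exists 1. split; [lra|]. intros a [Ha _]. destruct (HF a Ha) as [_ [Hr [_ Hb]]].
    exists (snd (F a)). split; auto. intros y Hy. apply Hkey in Hy; auto. apply (Hb y Hy).
  - intros f Hf.
    assert (Hds : forall s, sig f = s -> dir_sign Q n W f h w s).
    { intros s Es. exists 1. split; [lra|]. intros a [Ha _].
      destruct (HF a Ha) as [_ [Hr [_ Hb]]].
      exists (snd (F a)). split; auto. split; intros y Hy; apply Hkey in Hy; auto.
      - apply (Hb y Hy).
      - rewrite <- Es. apply (Hb y Hy); auto. }
    destruct (Hsig 1 Rlt_0_1) as [U [_ [[y Hy] [_ HUs]]]].
    pose proof (HUs f Hf y Hy) as E.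
    unfold decreasing_dir, constant_dir, increasing_dir.
    destruct (sgn_cases (f y - f w)) as [E'|[E'|E']]; rewrite E' in E; auto.
Qed.

Theorem theorem3 (Q : R -> Prop) (HQ : is_subfield Q)
    (P : problem) (HP : forall S, P S -> valid_structure Q S)
    (A : algorithm) (HA : valid_algorithm Q P A) :
  (forall S, P S -> forall w, s_W S w ->
     exists h : R -> pt,
       good_dir Q (s_n S) h /\
       continues Q (s_n S) (s_W S) h w /\
       (forall p v, branch_at (A S) p v ->
          decreasing_dir Q (s_n S) (s_W S) v h w \/
          constant_dir Q (s_n S) (s_W S) v h w \/
          increasing_dir Q (s_n S) (s_W S) v h w)) /\
  exists tb : tie_policy, uses_symbolic_perturbation Q P A tb.
Proof.
  assert (H1 : forall S, P S -> forall w, s_W S w ->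
     exists h : R -> pt,
       good_dir Q (s_n S) h /\
       continues Q (s_n S) (s_W S) h w /\
       (forall p v, branch_at (A S) p v ->
          decreasing_dir Q (s_n S) (s_W S) v h w \/
          constant_dir Q (s_n S) (s_W S) v h w \/
          increasing_dir Q (s_n S) (s_W S) v h w)).
  { intros S HS w Hw. destruct (HP S HS) as [_ [HSO [_ _]]].
    destruct (part1 Q HQ (s_n S) (s_W S) (fns (A S)) w HSO Hw) as [h [Ha [Hb Hc]]].
    - intros f Hf. destruct (in_branch _ _ Hf) as [p Hp]. exact (proj1 (HA S HS p f Hp)).
    - exists h. split; auto. split; auto. intros p v Hp. apply Hc. eapply branch_in; eauto. }
  split; [exact H1|].
  assert (Hh : forall S, exists H : pt -> R -> pt, forall w, P S -> s_W S w ->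
       good_dir Q (s_n S) (H w) /\
       continues Q (s_n S) (s_W S) (H w) w /\
       (forall p v, branch_at (A S) p v ->
          decreasing_dir Q (s_n S) (s_W S) v (H w) w \/
          constant_dir Q (s_n S) (s_W S) v (H w) w \/
          increasing_dir Q (s_n S) (s_W S) v (H w) w)).
  { intro S. apply (fchoice (fun w (h : R -> pt) => P S -> s_W S w ->
       good_dir Q (s_n S) h /\
       continues Q (s_n S) (s_W S) h w /\
       (forall p v, branch_at (A S) p v ->
          decreasing_dir Q (s_n S) (s_W S) v h w \/
          constant_dir Q (s_n S) (s_W S) v h w \/
          increasing_dir Q (s_n S) (s_W S) v h w))). intro w.
    destruct (classic (P S /\ s_W S w)) as [[a b]|nn].
    - destruct (H1 S a w b) as [h Hh]. exists h; auto.
    - exists (fun _ => vzero). intros; exfalso; tauto. }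
  destruct (fchoice _ Hh) as [H HH].
  exists (fun S w p => if excluded_middle_informative
            (exists v, branch_at (A S) p v /\ decreasing_dir Q (s_n S) (s_W S) v (H S w) w)
          then true else false).
  intros S HS w Hw. exists (H S w). destruct (HH S w HS Hw) as [a [b c]].
  split; auto. split; auto. split; auto.
  intros p v Hb _ _.
  destruct excluded_middle_informative as [[v' [Hb' Hd]]|Hn]; split; intro X; auto.
  - rewrite (branch_uniq _ _ _ _ Hb Hb'). exact Hd.
  - discriminate.
  - exfalso; apply Hn; eauto.
Qed.
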